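(* Every $\mathbb{F}_q$-subplane of $\mathrm{PG}(2,q^n)$ external to $l_\infty$ is equivalent, under the stabiliser of $l_\infty$ in $\mathrm{PGL}(3,q^n)$, to $\pi_{\omega,\lambda}$ for some $\omega,\lambda\in\mathbb{F}_{q^n}$ such that $1,\omega,\lambda$ are linearly independent over $\mathbb{F}_q$. Every $\mathbb{F}_q$-subplane tangent to $l_\infty$ is equivalent under this stabiliser to $\pi_{\omega,0}$ for some $\omega\in\mathbb{F}_{q^n}\setminus\mathbb{F}_q$.
   Context: Points of $\mathrm{PG}(2,q^n)$ are written $(a,b,c)_{\mathbb{F}_{q^n}}$; $l_\infty$ is the line $c=0$. An $\mathbb{F}_q$-subplane is a set $\{(su+tv+wz)_{\mathbb{F}_{q^n}}:(s,t,w)\in\mathbb{F}_q^3\setminus\{0\}\}$ for $\mathbb{F}_{q^n}$-independent $u,v,z\in\mathbb{F}_{q^n}^3$; it is external to $l_\infty$ if it has no point on $l_\infty$ and tangent if exactly one. For $\omega,\lambda\in\mathbb{F}_{q^n}$, $\pi_{\omega,\lambda}=\{(s,u,s\lambda+u\omega+t)_{\mathbb{F}_{q^n}}:(s,t,u)\in\mathbb{F}_q^3\setminus\{0\}\}$, the $\mathbb{F}_q$-subplane determined by the vectors $(1,0,\lambda),(0,1,\omega),(0,0,1)$. *)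

(* Defs.v *)
From HB Require Import structures.
From mathcomp Require Import all_boot all_order all_algebra all_field.
Set Implicit Arguments. Unset Strict Implicit. Unset Printing Implicit Defensive.
Import GRing.Theory.
Local Open Scope ring_scope.

(* F plays the role of F_q (a finite field), L the role of F_{q^n}, a finite
   dimensional extension of F (n = \dim {:L}).
   Points of PG(2,L) are represented by nonzero row vectors in 'rV[L]_3
   (homogeneous coordinates (a,b,c)); a collineation in PGL(3,L) is
   represented by an invertible matrix M acting by x |-> x *m M
   (scalar matrices act trivially on points). *)

Section PG2.
Variables (F : finFieldType) (L : fieldExtType F).

Definition vec3 (a b c : L) : 'rV[L]_3 := \row_(i < 3) [:: a; b; c]`_i.

Definition comb (u v z : 'rV[L]_3) (s t w : F) : 'rV[L]_3 :=
  s%:A *: u + t%:A *: v + w%:A *: z.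

Definition subplane_pt (u v z : 'rV[L]_3) (x : 'rV[L]_3) : Prop :=
  x != 0 /\ exists (c : L) (s t w : F), (s, t, w) != (0, 0, 0) /\
                                     x = c *: comb u v z s t w.

Definition on_linf (x : 'rV[L]_3) : Prop := x ord0 ord_max = 0.

Definition same_point (x y : 'rV[L]_3) : Prop := exists c : L, c != 0 /\ y = c *: x.

Definition external (u v z : 'rV[L]_3) : Prop :=
  forall x, subplane_pt u v z x -> ~ on_linf x.

Definition tangent (u v z : 'rV[L]_3) : Prop :=
  exists p, [/\ subplane_pt u v z p, on_linf p &
     forall x, subplane_pt u v z x -> on_linf x -> same_point p x].

Definition stab_linf (M : 'M[L]_3) : Prop :=
  M \in unitmx /\ forall x, on_linf x -> on_linf (x *m M).

Definition equiv_linf (P Q : 'rV[L]_3 -> Prop) : Prop :=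
  exists M, stab_linf M /\ forall x, P x <-> Q (x *m M).

(* pi_{omega,lambda} = {(s, u, s lambda + u omega + t)} *)
Definition pi_ol (omega lambda : L) : 'rV[L]_3 -> Prop :=
  subplane_pt (vec3 1 0 lambda) (vec3 0 1 omega) (vec3 0 0 1).

End PG2.

(* Main.v *)
Require Import Defs.
From HB Require Import structures.
From mathcomp Require Import all_boot all_order all_algebra all_field.
From mathcomp Require Import ring.
Import GRing.Theory.
Local Open Scope ring_scope.

Lemma free3 (K : fieldType) (V : vectType K) (u v z : V) :
  free [:: u; v; z] <-> (forall a b c, a*:u+b*:v+c*:z = 0 -> [/\ a=0, b=0 & c=0]).
Proof.
split.
- move/freeP => H a b c E.
  have := H (fun i : 'I_3 => [:: a; b; c]`_i).
  rewrite !big_ord_recl big_ord0 /= addr0 addrA => /(_ E) H'.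
  by split; [exact: (H' 0) | exact: (H' 1) | exact: (H' 2)].
- move=> H; apply/freeP => k.
  rewrite !big_ord_recl big_ord0 /= addr0 addrA => /H [h0 h1 h2] i.
  case: i => [[|[|[|i]]] Hi] //.
  + by rewrite -h0; congr k; apply: val_inj.
  + by rewrite -h1; congr k; apply: val_inj.
  + by rewrite -h2; congr k; apply: val_inj.
Qed.

Section Work.
Variables (F : finFieldType) (L : fieldExtType F).

Lemma transport (M : 'M[L]_3) (u v z x : 'rV[L]_3) : M \in unitmx ->
  subplane_pt u v z x <-> subplane_pt (u *m M) (v *m M) (z *m M) (x *m M).
Proof.
move=> Mu.
have combM s t w : comb (u *m M) (v *m M) (z *m M) s t w = comb u v z s t w *m M.
  by rewrite /comb !mulmxDl !scalemxAl.
split.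
- case=> x0 [c [s [t [w [n E]]]]]; split.
    by apply: contraNneq x0 => h; rewrite -(mulmxK Mu x) h mul0mx.
  by exists c, s, t, w; split => //; rewrite combM E scalemxAl.
- case=> x0 [c [s [t [w [n E]]]]]; split.
    by apply: contraNneq x0 => ->; rewrite mul0mx.
  exists c, s, t, w; split => //.
  by rewrite -(mulmxK Mu x) E combM -scalemxAl mulmxK.
Qed.

Lemma mainG (u v z : 'rV[L]_3) : free [:: u; v; z] -> z ord0 ord_max != 0 ->
  equiv_linf (subplane_pt u v z)
    (pi_ol (v ord0 ord_max / z ord0 ord_max) (u ord0 ord_max / z ord0 ord_max)).
Proof.
move=> fr z0.
set B := \matrix_(i < 3) [:: u; v; z]`_i.
have Bu : B \in unitmx.
  rewrite -row_free_unit -kermx_eq0; apply/eqP/row_matrixP => i; rewrite row0.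
  set r := row i (kermx B).
  have : r *m B = 0 by rewrite -row_mul mulmx_ker row0.
  rewrite mulmx_sum_row !big_ord_recl big_ord0 addr0 addrA !rowK /=.
  move/(proj1 (free3 _ _ u v z) fr) => [h0 h1 h2].
  apply/rowP => j; rewrite [RHS]mxE.
  case: j => [[|[|[|j]]] Hj] //.
  + by rewrite -h0 /r; congr (row _ _ _ _); apply: val_inj.
  + by rewrite -h1 /r; congr (row _ _ _ _); apply: val_inj.
  + by rewrite -h2 /r; congr (row _ _ _ _); apply: val_inj.
set om := v ord0 ord_max / z ord0 ord_max.
set la := u ord0 ord_max / z ord0 ord_max.
set T := \matrix_(i < 3) [:: vec3 1 0 la; vec3 0 1 om; vec3 0 0 1]`_i.
set T' := \matrix_(i < 3) [:: vec3 1 0 (- la); vec3 0 1 (- om); vec3 0 0 1]`_i.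
have TT : T *m T' = 1%:M.
  apply/matrixP => i j; rewrite !mxE !big_ord_recl big_ord0 /=.
  case: i => [[|[|[|i]]] Hi] //; case: j => [[|[|[|j]]] Hj] //;
    rewrite !mxE /=; ring.
have Tu : T \in unitmx by case: (mulmx1_unit TT).
set M := invmx B *m T.
have Mu : M \in unitmx by rewrite unitmx_mul unitmx_inv Bu Tu.
set zi := (z ord0 ord_max)^-1.
pose e : 'M[L]_(3,1) := delta_mx ord_max 0.
have Te : T *m e = zi *: (B *m e).
  rewrite -!colE; apply/matrixP => i j; rewrite !mxE.
  case: i => [[|[|[|i]]] Hi] //; rewrite !mxE /= /la /om /zi.
  + by rewrite mulrC.
  + by rewrite mulrC.
  + by rewrite mulVf.
have Me : M *m e = zi *: e.
  by rewrite -mulmxA Te -scalemxAr mulmxA mulVmx // mul1mx.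
have xe (x : 'rV[L]_3) : (x *m M) ord0 ord_max = zi * x ord0 ord_max.
  have -> : (x *m M) ord0 ord_max = ((x *m M) *m e) 0 0 by rewrite /e -colE !mxE.
  by rewrite -mulmxA Me -scalemxAr mxE /e -colE !mxE.
have rowM (i : 'I_3) : row i B *m M = row i T.
  by rewrite -row_mul mulmxA mulmxV // mul1mx.
exists M; split.
  split => // x; rewrite /on_linf xe => ->; exact: mulr0.
move=> x; rewrite /pi_ol (transport _ _ _ _ _ Mu).
have -> : u *m M = vec3 1 0 la by have := rowM 0; rewrite !rowK.
have -> : v *m M = vec3 0 1 om by have := rowM 1; rewrite !rowK.
have -> : z *m M = vec3 0 0 1 by have := rowM 2; rewrite !rowK.
by [].
Qed.

Lemma algM (a b : F) : (a * b)%:A = a%:A * b%:A :> L.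
Proof. by rewrite -scalerAl mul1r scalerA. Qed.

Lemma alg_eq0 (a : F) : (a%:A == 0 :> L) = (a == 0).
Proof. by rewrite scaler_eq0 oner_eq0 orbF. Qed.

Lemma combE (u v z : 'rV[L]_3) s t w j i :
  (comb u v z s t w) j i = s%:A * u j i + t%:A * v j i + w%:A * z j i.
Proof. by rewrite /comb !mxE. Qed.

Lemma comb000 (u v z : 'rV[L]_3) : comb u v z 0 0 0 = 0.
Proof. by rewrite /comb !scale0r !addr0. Qed.

Lemma subplaneE (u v z x : 'rV[L]_3) :
  subplane_pt u v z x <-> x != 0 /\ exists c s t w, x = c *: comb u v z s t w.
Proof.
split; first by case=> x0 [c [s [t [w [_ E]]]]]; split => //; exists c, s, t, w.
case=> x0 [c [s [t [w E]]]]; split => //; exists c, s, t, w; split => //.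
apply/eqP => h; case: h E => -> -> ->; rewrite comb000 scaler0 => E.
by rewrite E eqxx in x0.
Qed.

Lemma same_set (u v z u' v' z' : 'rV[L]_3) :
  (forall s t w, exists k s' t' w', comb u v z s t w = k *: comb u' v' z' s' t' w') ->
  forall x, subplane_pt u v z x -> subplane_pt u' v' z' x.
Proof.
move=> H x /subplaneE [x0 [c [s [t [w E]]]]]; apply/subplaneE; split => //.
have [k [s' [t' [w' E']]]] := H s t w.
by exists (c * k), s', t', w'; rewrite E E' scalerA.
Qed.

Lemma swap12 (u v z x : 'rV[L]_3) : subplane_pt u v z x <-> subplane_pt v u z x.
Proof.
split; apply: same_set => s t w; exists 1, t, s, w; rewrite scale1r;
  by apply/rowP => i; rewrite !combE; ring.
Qed.

Lemma swap13 (u v z x : 'rV[L]_3) : subplane_pt u v z x <-> subplane_pt z v u x.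
Proof.
split; apply: same_set => s t w; exists 1, w, t, s; rewrite scale1r;
  by apply/rowP => i; rewrite !combE; ring.
Qed.

Lemma shear (u v z x : 'rV[L]_3) (s t w : F) : s != 0 ->
  subplane_pt u v z x <-> subplane_pt (comb u v z s t w) v z x.
Proof.
move=> s0; have sA : s%:A != 0 :> L by rewrite alg_eq0.
split; apply: same_set => a b d.
- exists (s%:A)^-1, a, (b * s - a * t), (d * s - a * w).
  apply: (@scalerI _ _ (s%:A)) => //; rewrite scalerA mulfV // scale1r.
  apply/rowP => i; rewrite !mxE ?combE ?scalerBl ?algM; ring.
- exists 1, (a * s), (a * t + b), (a * w + d); rewrite scale1r.
  apply/rowP => i; rewrite !combE !scalerDl !algM; ring.
Qed.

Lemma free_eq (u v z : 'rV[L]_3) a b c a' b' c' : free [:: u; v; z] ->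
  a *: u + b *: v + c *: z = a' *: u + b' *: v + c' *: z -> [/\ a = a', b = b' & c = c'].
Proof.
move=> fr E.
have [] := proj1 (free3 _ _ u v z) fr (a - a') (b - b') (c - c').
  have -> : (a - a') *: u + (b - b') *: v + (c - c') *: z =
    (a *: u + b *: v + c *: z) - (a' *: u + b' *: v + c' *: z).
    by apply/rowP => i; rewrite !mxE; ring.
  by rewrite E subrr.
by move=> /subr0_eq -> /subr0_eq -> /subr0_eq ->.
Qed.

Lemma Tcore (u v z : 'rV[L]_3) (s t w : F) : free [:: u; v; z] -> s != 0 ->
  (comb u v z s t w) ord0 ord_max = 0 ->
  (forall a b e : F, (comb u v z a b e) ord0 ord_max = 0 ->
     exists k : L, [/\ a%:A = k * s%:A, b%:A = k * t%:A & e%:A = k * w%:A]) ->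
  exists omega : L, (forall a : F, omega != a%:A) /\
     equiv_linf (subplane_pt u v z) (pi_ol omega 0).
Proof.
move=> fr s0 u'0 H.
have sA : s%:A != 0 :> L by rewrite alg_eq0.
have k0 k : 0%:A = k * s%:A :> L -> k = 0.
  by rewrite scale0r => /esym /eqP; rewrite mulf_eq0 (negPf sA) orbF => /eqP.
have z0 : z ord0 ord_max != 0.
  apply/eqP => h; have [|k [h1 _ h3]] := H 0 0 1; first by rewrite combE h !scale0r !mul0r mulr0 !addr0.
  by move: h3; rewrite (k0 _ h1) mul0r scale1r => /eqP; rewrite oner_eq0.
exists (v ord0 ord_max / z ord0 ord_max); split.
  move=> a; apply/eqP => h.
  have [|k [h1 h2 _]] := H 0 1 (- a).
    rewrite combE scale0r scale1r mul0r add0r scaleNr mulNr.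
    by rewrite -h mulfVK // mul1r subrr.
  by move: h2; rewrite (k0 _ h1) mul0r scale1r => /eqP; rewrite oner_eq0.
set u' := comb u v z s t w.
have fr' : free [:: u'; v; z].
  apply/free3 => a b c E.
  have [] := proj1 (free3 _ _ u v z) fr (a * s%:A) (a * t%:A + b) (a * w%:A + c).
    rewrite -E; apply/rowP => i; rewrite !mxE ?combE; ring.
  move=> /eqP; rewrite mulf_eq0 (negPf sA) orbF => /eqP a0.
  by rewrite a0 !mul0r !add0r.
have [M [stM HM]] := mainG _ _ _ fr' z0.
exists M; split => // x; rewrite (shear _ _ _ _ s t w s0) HM.
by rewrite /u' u'0 mul0r.
Qed.

Lemma equiv_ext (P P' Q : 'rV[L]_3 -> Prop) :
  (forall x, P x <-> P' x) -> equiv_linf P Q -> equiv_linf P' Q.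
Proof.
by move=> E [M [sM HM]]; exists M; split => // x; rewrite -E.
Qed.

Lemma free3L (a b c : L) :
  (forall x y w : F, x *: a + y *: b + w *: c = 0 -> [/\ x = 0, y = 0 & w = 0]) ->
  free [:: a; b; c].
Proof.
move=> H; apply/freeP => k.
rewrite !big_ord_recl big_ord0 /= addr0 addrA => /H [h0 h1 h2] i.
case: i => [[|[|[|i]]] Hi] //.
+ by rewrite -h0; congr k; apply: val_inj.
+ by rewrite -h1; congr k; apply: val_inj.
+ by rewrite -h2; congr k; apply: val_inj.
Qed.

End Work.

Theorem lemma3p2 (F : finFieldType) (L : fieldExtType F) (u v z : 'rV[L]_3) :
  free [:: u; v; z] ->
  (external u v z ->
     exists omega lambda : L,
       free [:: 1; omega; lambda] /\ equiv_linf (subplane_pt u v z) (pi_ol omega lambda)) /\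
  (tangent u v z ->
     exists omega : L,
       (forall a : F, omega != a%:A) /\ equiv_linf (subplane_pt u v z) (pi_ol omega 0)).
Proof.
move=> fr.
have frE := proj1 (free3 _ _ u v z) fr.
have pt a b e : comb u v z a b e != 0 -> subplane_pt u v z (comb u v z a b e).
  by move=> h; apply/subplaneE; split => //; exists 1, a, b, e; rewrite scale1r.
have cz : comb u v z 0 0 1 = z by rewrite /comb !scale0r !add0r !scale1r.
have z0 : z != 0.
  apply/eqP => h; have [|_ _] := frE 0 0 1; first by rewrite h !scale0r !scaler0 !addr0.
  by move/eqP; rewrite oner_eq0.
split.
- move=> ext.
  have z3 : z ord0 ord_max != 0.
    by apply/eqP => h; have := pt 0 0 1; rewrite cz => /(_ z0) Hz; exact: (ext z Hz h).
  exists (v ord0 ord_max / z ord0 ord_max), (u ord0 ord_max / z ord0 ord_max).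
  split; last exact: (mainG _ _ _ _ _ fr z3).
  apply: free3L => a b c E.
  have E3 : (comb u v z c b a) ord0 ord_max = 0.
    have {}E : a%:A + b%:A * (v ord0 ord_max / z ord0 ord_max) +
        c%:A * (u ord0 ord_max / z ord0 ord_max) = 0 by rewrite !mulr_algl.
    rewrite combE.
    have -> : c%:A * u ord0 ord_max + b%:A * v ord0 ord_max + a%:A * z ord0 ord_max
      = (a%:A + b%:A * (v ord0 ord_max / z ord0 ord_max) +
         c%:A * (u ord0 ord_max / z ord0 ord_max)) * z ord0 ord_max.
      by field.
    by rewrite E mul0r.
  have : comb u v z c b a = 0.
    by apply/eqP; apply: contraT => h; case: (ext _ (pt _ _ _ h)).
  move/frE => [] /eqP; rewrite alg_eq0 => /eqP -> /eqP; rewrite alg_eq0 => /eqP ->.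
  by move/eqP; rewrite alg_eq0 => /eqP ->.
- case=> p [Hp Lp Up].
  case: Hp => p0 [c [s [t [w [n E]]]]].
  have c0 : c != 0 by apply: contraNneq p0 => c0; rewrite E c0 scale0r.
  have E3 : (comb u v z s t w) ord0 ord_max = 0.
    move: Lp; rewrite /on_linf E mxE => /eqP; rewrite mulf_eq0 (negPf c0) /=.
    by move/eqP.
  have H a b e : (comb u v z a b e) ord0 ord_max = 0 ->
     exists k : L, [/\ a%:A = k * s%:A, b%:A = k * t%:A & e%:A = k * w%:A].
    move=> h; have [x0|x0] := eqVneq (comb u v z a b e) 0.
      move: (frE _ _ _ x0) => [-> -> ->]; exists 0; by rewrite !mul0r.
    have [d [_ Ed]] := Up _ (pt _ _ _ x0) h.
    exists (d * c); move: Ed; rewrite E scalerA /comb !scalerDr !scalerA.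
    by move/free_eq => /(_ fr) [-> -> ->].
  have [s0|] := eqVneq s 0; last first.
    by move=> s0; exact: (@Tcore _ _ u v z s t w fr s0 E3 H).
  have [t0|] := eqVneq t 0; last first.
    move=> t0.
    have fr' : free [:: v; u; z].
      apply/free3 => a b e h; have [|h1 h2 h3] := frE b a e.
        by rewrite -h (addrC (b *: u)).
      by split.
    have E3' : (comb v u z t s w) ord0 ord_max = 0.
      have -> : (comb v u z t s w) ord0 ord_max = (comb u v z s t w) ord0 ord_max.
        by rewrite !combE; ring.
      exact: E3.
    have H' a b e : (comb v u z a b e) ord0 ord_max = 0 ->
        exists k : L, [/\ a%:A = k * t%:A, b%:A = k * s%:A & e%:A = k * w%:A].
      move=> h; have [|k [h1 h2 h3]] := H b a e.
        by rewrite -h !combE; ring.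
      by exists k; split.
    have [om [Hom Heq]] := @Tcore _ _ v u z t s w fr' t0 E3' H'.
    exists om; split => //; apply: equiv_ext Heq => x.
    exact: iff_sym (swap12 _ _ u v z x).
  have w0 : w != 0 by apply: contraNneq n => w0; rewrite s0 t0 w0.
  have fr' : free [:: z; v; u].
    apply/free3 => a b e h; have [|h1 h2 h3] := frE e b a.
      by move: h; rewrite addrC (addrC (a *: z)) addrA.
    by split.
  have E3' : (comb z v u w t s) ord0 ord_max = 0.
    have -> : (comb z v u w t s) ord0 ord_max = (comb u v z s t w) ord0 ord_max.
      by rewrite !combE; ring.
    exact: E3.
  have H' a b e : (comb z v u a b e) ord0 ord_max = 0 ->
      exists k : L, [/\ a%:A = k * w%:A, b%:A = k * t%:A & e%:A = k * s%:A].
    move=> h; have [|k [h1 h2 h3]] := H e b a.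
      by rewrite -h !combE; ring.
    by exists k; split.
  have [om [Hom Heq]] := @Tcore _ _ z v u w t s fr' w0 E3' H'.
  exists om; split => //; apply: equiv_ext Heq => x.
  exact: iff_sym (swap13 _ _ u v z x).
Qed.
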